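(* Let $K$ be a finite group and let $A\subseteq K$ be such that $L:=L(\{1\}\cup A)$ is a reflection system for $K$. If $x\in L$, then $\{1,x\}\cup xA$ generates the reflection system $xL$ for $K$ and $\{1,x\}\cup Ax$ generates the reflection system $Lx$ for $K$, i.e. $L(\{1,x\}\cup xA)=xL$ and $L(\{1,x\}\cup Ax)=Lx$, and both are reflection systems for $K$ equivalent to (but possibly not equal to) $L$.
   Context: For a group $K$ and $a,b\in K$ put $a\circ b:=ab^{-1}a$. For $X\subseteq K$, $L(X)$ denotes the closure of $X$ under $\circ$, i.e. the smallest subset of $K$ containing $X$ and closed under $\circ$; one says $X$ generates $L(X)$. A reflection system for a finite group $K$ is a subset $L\subseteq K$ such that (1) $L$ generates $K$ as a group, (2) $L$ is closed under $\circ$, and (3) $1\in L$. Two reflection systems $L,L'$ for $K$ are called equivalent if $L'=\phi(xL)$ or $L'=\phi(Lx)$ for some $x\in L$ and some automorphism $\phi$ of $K$. *)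

(* Defs.v *)
From mathcomp Require Import all_boot all_fingroup.
Set Implicit Arguments. Unset Strict Implicit. Unset Printing Implicit Defensive.
Local Open Scope group_scope.

Section Refl.
Variable gT : finGroupType.

Definition circ (a b : gT) : gT := a * b^-1 * a.

Definition circ_closed (Y : {set gT}) : bool :=
  [forall a in Y, forall b in Y, circ a b \in Y].

Definition refl_closure (X : {set gT}) : {set gT} :=
  \bigcap_(Y : {set gT} | (X \subset Y) && circ_closed Y) Y.

Definition reflection_system (K : {group gT}) (L : {set gT}) : Prop :=
  [/\ L \subset K, <<L>> = K, circ_closed L & 1 \in L].

Definition refl_equivalent (K : {group gT}) (L L' : {set gT}) : Prop :=
  exists2 x, x \in L &
  exists2 phi : {perm gT}, phi \in Aut K &
    L' = [set phi y | y in x *: L] \/ L' = [set phi y | y in L :* x].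
End Refl.

(* Main.v *)
Require Import Defs.
From mathcomp Require Import all_boot all_fingroup.
Local Open Scope group_scope.

Set Implicit Arguments.
Section Aux.
Variable gT : finGroupType.
Implicit Types X Y : {set gT}.

Lemma sub_closure X : X \subset refl_closure X.
Proof. by apply/bigcapsP => Y /andP[]. Qed.

Lemma closure_min X Y : X \subset Y -> circ_closed Y -> refl_closure X \subset Y.
Proof. by move=> sXY cY; apply: bigcap_inf; rewrite sXY cY. Qed.

Lemma closure_closed X : circ_closed (refl_closure X).
Proof.
apply/forallP => a; apply/implyP => /bigcapP Ha.
apply/forallP => b; apply/implyP => /bigcapP Hb.
apply/bigcapP => Y PY; have := PY; case/andP => _ /forallP cY.
by have := cY a; rewrite Ha // => /forallP /(_ b); rewrite Hb.
Qed.

Lemma closure_mono X Y : X \subset Y -> refl_closure X \subset refl_closure Y.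
Proof.
move=> sXY; apply: closure_min (closure_closed Y).
exact: subset_trans sXY (sub_closure Y).
Qed.

Lemma closure_circ X a b : a \in refl_closure X -> b \in refl_closure X ->
  circ a b \in refl_closure X.
Proof.
move=> Ha Hb; have := closure_closed X.
by move/forallP/(_ a); rewrite Ha => /forallP/(_ b); rewrite Hb.
Qed.

Lemma closure_imset_sub (f : gT -> gT) X :
  (forall a b, f (circ a b) = circ (f a) (f b)) ->
  refl_closure (f @: X) \subset f @: refl_closure X.
Proof.
move=> hf; apply: closure_min; first exact: imsetS (sub_closure X).
apply/forallP => a; apply/implyP => /imsetP[a' Ha' ->].
apply/forallP => b; apply/implyP => /imsetP[b' Hb' ->].
by rewrite -hf imset_f // closure_circ.
Qed.

Lemma closure_imset (f g : gT -> gT) X :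
  cancel f g -> cancel g f ->
  (forall a b, f (circ a b) = circ (f a) (f b)) ->
  refl_closure (f @: X) = f @: refl_closure X.
Proof.
move=> fK gK hf; apply/eqP; rewrite eqEsubset closure_imset_sub //=.
have hg : forall a b, g (circ a b) = circ (g a) (g b).
  by move=> a b; apply: (can_inj fK); rewrite hf !gK.
have eX : forall Y, g @: (f @: Y) = Y.
  by move=> Y; rewrite -imset_comp (eq_imset _ fK) imset_id.
have := @closure_imset_sub g (f @: X) hg; rewrite eX => H.
apply/subsetP => _ /imsetP[y Hy ->].
have /imsetP[z Hz ->] := subsetP H y Hy; by rewrite gK.
Qed.

Lemma circ_l (x a b : gT) : x * circ a b = circ (x * a) (x * b).
Proof. by rewrite /circ invMg !mulgA -(mulgA _ x^-1) mulVg mulg1. Qed.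

Lemma circ_r (x a b : gT) : circ a b * x = circ (a * x) (b * x).
Proof. by rewrite /circ invMg !mulgA mulgK. Qed.

End Aux.

Theorem lemma2p3 (gT : finGroupType) (K : {group gT}) (A : {set gT}) :
  A \subset K ->
  reflection_system K (refl_closure (1 |: A)) ->
  forall x, x \in refl_closure (1 |: A) ->
  let L := refl_closure (1 |: A) in
  [/\ refl_closure ([set 1; x] :|: x *: A) = x *: L,
      refl_closure ([set 1; x] :|: A :* x) = L :* x,
      reflection_system K (x *: L) /\ reflection_system K (L :* x)
    & refl_equivalent K L (x *: L) /\ refl_equivalent K L (L :* x)].
Proof.
move=> sAK [sLK genL cL L1] x xL L.
have L1' : 1 \in L by [].
have xL' : x \in L by [].
have xK : x \in K by apply: (subsetP sLK).
have xVL : x^-1 \in L.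
  by have := closure_circ L1' xL'; rewrite /circ mul1g mulg1.
have eL : x *: L = refl_closure (mulg x @: (1 |: A)).
  rewrite (closure_imset _ (mulKg x) (mulKVg x)); last by move=> *; exact: circ_l.
  by rewrite -lcosetE.
have eR : L :* x = refl_closure ((mulg^~ x) @: (1 |: A)).
  rewrite (closure_imset _ (mulgK x) (mulgKV x)); last by move=> *; exact: circ_r.
  by rewrite -rcosetE.
have oneL : 1 \in x *: L by rewrite mem_lcoset mulg1.
have oneR : 1 \in L :* x by rewrite mem_rcoset mul1g.
have xxL : x \in x *: L by rewrite mem_lcoset mulVg.
have xxR : x \in L :* x by rewrite mem_rcoset mulgV.
have ccL : circ_closed (x *: L) by rewrite eL; exact: closure_closed.
have ccR : circ_closed (L :* x) by rewrite eR; exact: closure_closed.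
have rsL : reflection_system K (x *: L).
  split=> //.
  - apply/subsetP => y; rewrite mem_lcoset => Hy.
    by rewrite -(mulKVg x y) groupM // (subsetP sLK).
  - apply/eqP; rewrite eqEsubset gen_subG; apply/andP; split.
      apply/subsetP => y; rewrite mem_lcoset => Hy.
      by rewrite -(mulKVg x y) groupM // (subsetP sLK).
    rewrite -{1}genL gen_subG; apply/subsetP => l Hl.
    rewrite -(mulKg x l) groupM ?groupV ?mem_gen //.
    by rewrite mem_lcoset mulKg.
have rsR : reflection_system K (L :* x).
  split=> //.
  - apply/subsetP => y; rewrite mem_rcoset => Hy.
    by rewrite -(mulgKV x y) groupM // (subsetP sLK).
  - apply/eqP; rewrite eqEsubset gen_subG; apply/andP; split.
      apply/subsetP => y; rewrite mem_rcoset => Hy.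
      by rewrite -(mulgKV x y) groupM // (subsetP sLK).
    rewrite -{1}genL gen_subG; apply/subsetP => l Hl.
    rewrite -(mulgK x l) groupM ?groupV ?mem_gen //.
    by rewrite mem_rcoset mulgK.
have sAL : A \subset L by apply: subset_trans (sub_closure _); exact: subsetUr.
split.
- apply/eqP; rewrite eqEsubset; apply/andP; split.
    apply: closure_min ccL; apply/subsetP => y; rewrite !inE.
    case/orP => [/orP[/eqP-> | /eqP->] // | ]; rewrite !mem_lcoset.
    exact: (subsetP sAL).
  rewrite eL; apply: closure_mono; apply/subsetP => _ /imsetP[y Hy ->].
  move: Hy; rewrite !inE => /orP[/eqP-> | Hy]; first by rewrite mulg1 eqxx orbT.
  by rewrite mem_lcoset mulKg Hy orbT.
- apply/eqP; rewrite eqEsubset; apply/andP; split.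
    apply: closure_min ccR; apply/subsetP => y; rewrite !inE.
    case/orP => [/orP[/eqP-> | /eqP->] // | ]; rewrite !mem_rcoset.
    exact: (subsetP sAL).
  rewrite eR; apply: closure_mono; apply/subsetP => _ /imsetP[y Hy ->].
  move: Hy; rewrite !inE => /orP[/eqP-> | Hy]; first by rewrite mul1g eqxx orbT.
  by rewrite mem_rcoset mulgK Hy orbT.
- by [].
- split; exists x => //; exists 1; rewrite ?group1 //;
    [left | right]; (under eq_imset do rewrite perm1); by rewrite imset_id.
Qed.
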